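(* Let $\mathcal{E}$ be the 2D Laplace equation $u_{xx}+u_{yy}=0$, with cotangent equation $\{u_{xx}+u_{yy}=0,\ p_{xx}+p_{yy}=0\}$. Then each of the following is a variational bivector on $\mathcal{E}$: $B_0=p$, $B_1=p_{yy}$, $B_2=p_{xy}$, $B_3=p_y+2(xp_{xy}+yp_{yy})$, $B_4=p_x+2(yp_{xy}-xp_{yy})$, $B_5=u_{yy}p_y-u_{xy}p_x+2(u_yp_{yy}-u_xp_{xy})$, $B_6=u_{yy}p_x+u_{xy}p_y+2(u_yp_{xy}+u_xp_{yy})$, $B_7=(u_y+xu_{xy}+yu_{yy})p_x+(u_x+yu_{xy}-xu_{yy})p_y+2(yu_x-xu_y)p_{yy}+2(xu_x+yu_y)p_{xy}$, $B_8=-(u_x+yu_{xy}-xu_{yy})p_x+(u_y+xu_{xy}+yu_{yy})p_y+2(xu_x+yu_y)p_{yy}-2(yu_x-xu_y)p_{xy}$.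
   Context: Setting: a scalar PDE $\mathcal{E}=\{F=0\}$ for one unknown $u(x^1,\dots,x^n)$, regarded as a submanifold of the infinite jet space with coordinates $x^i$, $u_\sigma$ ($\sigma$ a multi-index). $D_i$ are total derivatives, $D_\sigma$ their compositions. A $\mathcal{C}$-differential operator is an operator of the form $\sum_\sigma a^\sigma D_\sigma$ with smooth coefficients on the jet space (or on $\mathcal{E}$). The linearization is $\ell_F=\sum_\sigma \frac{\partial F}{\partial u_\sigma}D_\sigma$ and $\ell_{\mathcal{E}}$ its restriction to $\mathcal{E}$; $\Delta^*$ denotes the formal adjoint ($(\sum a^\sigma D_\sigma)^*=\sum(-1)^{|\sigma|}D_\sigma\circ a^\sigma$). The cotangent equation $\mathcal{T}^*\mathcal{E}$ is the system $\{F=0,\ \ell_F(p)=0\}$ (with all differential consequences), where $p$ is a new unknown of odd parity, so that all $p_\sigma$ are odd (anticommuting). Variational bivector: a $\mathcal{C}$-differential operator $H=\sum_\sigma h^\sigma D_\sigma$ on $\mathcal{E}$ such that (i) $\ell_{\mathcal{E}}(H_u)=0$ on $\mathcal{T}^*\mathcal{E}$, where $H_u=H(p)=\sum_\sigma h^\sigma p_\sigma$; and (ii) $H^*\circ\ell_{\mathcal{E}}^*=\ell_{\mathcal{E}}\circ H$ as operators on $\mathcal{E}$. Bivectors are identified with their functions $H_u$ (so ''$B=\sum B_\sigma p_\sigma$'' means $B=\sum B_\sigma D_\sigma$). *)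

(* Defs.v *)
From Stdlib Require Import Reals List.
Import ListNotations.
Open Scope R_scope.

(* Jet space of one unknown u(x,y) (n = 2 independent variables),     *)
(* extended by the (odd) cotangent variables p.                        *)
(* Coordinates: x, y, u_(i,j) = d^{i+j}u/dx^i dy^j, p_(i,j) likewise.   *)
(* Differential functions are polynomial expressions in these.        *)
Inductive expr : Type :=
| EC  : R -> expr
| EX  : expr
| EY  : expr
| EU  : nat -> nat -> expr
| EP  : nat -> nat -> expr
| EAdd : expr -> expr -> expr
| EMul : expr -> expr -> expr.

Record jetpt : Type := Jet {
  jx : R; jy : R;
  ju : nat -> nat -> R;
  jp : nat -> nat -> R }.

Fixpoint eval (t : jetpt) (e : expr) : R :=
  match e with
  | EC c => c
  | EX => jx t
  | EY => jy t
  | EU i j => ju t i j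
  | EP i j => jp t i j
  | EAdd a b => eval t a + eval t b
  | EMul a b => eval t a * eval t b
  end.

(* Total derivatives D_x (d = true) and D_y (d = false). *)
Fixpoint Dt (d : bool) (e : expr) : expr :=
  match e with
  | EC _ => EC 0
  | EX => EC (if d then 1 else 0)
  | EY => EC (if d then 0 else 1)
  | EU i j => if d then EU (S i) j else EU i (S j)
  | EP i j => if d then EP (S i) j else EP i (S j)
  | EAdd a b => EAdd (Dt d a) (Dt d b)
  | EMul a b => EAdd (EMul (Dt d a) b) (EMul a (Dt d b))
  end.

Definition Dsig (i j : nat) (e : expr) : expr :=
  Nat.iter i (Dt true) (Nat.iter j (Dt false) e).

Fixpoint dU (i j : nat) (e : expr) : expr :=
  match e with
  | EU k l => EC (if andb (Nat.eqb k i) (Nat.eqb l j) then 1 else 0)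
  | EAdd a b => EAdd (dU i j a) (dU i j b)
  | EMul a b => EAdd (EMul (dU i j a) b) (EMul a (dU i j b))
  | _ => EC 0
  end.

Fixpoint uord (e : expr) : nat :=
  match e with
  | EU i j => i + j
  | EAdd a b | EMul a b => Nat.max (uord a) (uord b)
  | _ => 0
  end.

Fixpoint p_free (e : expr) : Prop :=
  match e with
  | EP _ _ => False
  | EAdd a b | EMul a b => p_free a /\ p_free b
  | _ => True
  end.

(* A C-differential operator  sum_sigma a^sigma D_sigma, given as a     *)
(* finite list of (sigma, a^sigma).                                     *)
Definition cdo := list ((nat * nat) * expr).

Definition esum (l : list expr) : expr := fold_right EAdd (EC 0) l.

Definition apply_op (A : cdo) (f : expr) : expr :=
  esum (map (fun c => EMul (snd c) (Dsig (fst (fst c)) (snd (fst c)) f)) A).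

Definition apply_adj (A : cdo) (f : expr) : expr :=
  esum (map (fun c =>
         let '((i, j), a) := c in
         EMul (EC ((-1) ^ (i + j))) (Dsig i j (EMul a f))) A).

(* Linearization l_F = sum_sigma (dF/du_sigma) D_sigma (all sigma with  *)
(* |sigma| <= order of F; the other partial derivatives vanish).       *)
Definition lin (F : expr) : cdo :=
  let N := uord F in
  flat_map (fun i => map (fun j => ((i, j), dU i j F)) (seq 0 (S N))) (seq 0 (S N)).

(* Points of E = {F = 0} (with all differential consequences); the     *)
(* p-coordinates are unconstrained.                                    *)
Definition on_E (F : expr) (t : jetpt) : Prop :=
  forall i j, eval t (Dsig i j F) = 0.

Definition on_TE (F : expr) (t : jetpt) : Prop :=
  on_E F t /\ forall i j, eval t (Dsig i j (apply_op (lin F) (EP 0 0))) = 0.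

Definition Hu (H : cdo) : expr := apply_op H (EP 0 0).

(* Variational bivector on E = {F = 0}:
   (i)  l_E(H_u) = 0 on T^*E;
   (ii) H^* o l_E^* = l_E o H as operators on E (tested on all
        (polynomial) functions f on E, i.e. p-free f, at all points of E). *)
Definition variational_bivector (F : expr) (H : cdo) : Prop :=
  (forall t, on_TE F t -> eval t (apply_op (lin F) (Hu H)) = 0) /\
  (forall f, p_free f -> forall t, on_E F t ->
      eval t (apply_adj H (apply_adj (lin F) f)) =
      eval t (apply_op (lin F) (apply_op H f))).

Definition laplace : expr := EAdd (EU 2 0) (EU 0 2).

Definition u_x := EU 1 0.
Definition u_y := EU 0 1.
Definition u_xy := EU 1 1.
Definition u_yy := EU 0 2.
Definition eadd3 a b c := EAdd a (EAdd b c).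
Definition eneg a := EMul (EC (-1)) a.
Definition esc (c : R) a := EMul (EC c) a.

(* index (i,j) = p with i x-derivatives and j y-derivatives:
   p = (0,0), p_x = (1,0), p_y = (0,1), p_xy = (1,1), p_yy = (0,2). *)
Definition Bv0 : cdo := [((0,0)%nat, EC 1)].
Definition Bv1 : cdo := [((0,2)%nat, EC 1)].
Definition Bv2 : cdo := [((1,1)%nat, EC 1)].
Definition Bv3 : cdo :=
  [((0,1)%nat, EC 1); ((1,1)%nat, esc 2 EX); ((0,2)%nat, esc 2 EY)].
Definition Bv4 : cdo :=
  [((1,0)%nat, EC 1); ((1,1)%nat, esc 2 EY); ((0,2)%nat, esc (-2) EX)].
Definition Bv5 : cdo :=
  [((0,1)%nat, u_yy); ((1,0)%nat, eneg u_xy);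
   ((0,2)%nat, esc 2 u_y); ((1,1)%nat, esc (-2) u_x)].
Definition Bv6 : cdo :=
  [((1,0)%nat, u_yy); ((0,1)%nat, u_xy);
   ((1,1)%nat, esc 2 u_y); ((0,2)%nat, esc 2 u_x)].

Definition cA := eadd3 u_y (EMul EX u_xy) (EMul EY u_yy).
Definition cB := eadd3 u_x (EMul EY u_xy) (eneg (EMul EX u_yy)).
Definition cC := EAdd (EMul EY u_x) (eneg (EMul EX u_y)).
Definition cG := EAdd (EMul EX u_x) (EMul EY u_y).

Definition Bv7 : cdo :=
  [((1,0)%nat, cA); ((0,1)%nat, cB);
   ((0,2)%nat, esc 2 cC); ((1,1)%nat, esc 2 cG)].
Definition Bv8 : cdo :=
  [((1,0)%nat, eneg cB); ((0,1)%nat, cA);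
   ((0,2)%nat, esc 2 cG); ((1,1)%nat, esc (-2) cC)].

(* Main.v *)
Require Import Defs.
From Stdlib Require Import Reals List Lra Lia Setoid Morphisms.
Import ListNotations.
Open Scope R_scope.

Definition Dw (w : list bool) (e : expr) : expr := fold_left (fun e d => Dt d e) w e.
Definition eqv (a b : expr) : Prop := forall w t, eval t (Dw w a) = eval t (Dw w b).

#[local] Instance eqv_Equiv : Equivalence eqv.
Proof. split; red; unfold eqv; intros.
  - reflexivity.
  - symmetry; auto.
  - etransitivity; eauto. Qed.

Lemma eqv_eval a b t : eqv a b -> eval t a = eval t b.
Proof. intros H; exact (H [] t). Qed.

Lemma Dw_add w : forall a b, Dw w (EAdd a b) = EAdd (Dw w a) (Dw w b).
Proof. induction w; intros; simpl; auto. Qed.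

#[local] Instance Dt_prop d : Proper (eqv ==> eqv) (Dt d).
Proof. intros a b H w t. exact (H (d::w) t). Qed.

#[local] Instance add_prop : Proper (eqv ==> eqv ==> eqv) EAdd.
Proof. intros a a' Ha b b' Hb w t. rewrite !Dw_add. cbn [eval]. rewrite Ha, Hb. reflexivity. Qed.

Lemma mul_aux w : forall a a' b b', eqv a a' -> eqv b b' -> forall t,
  eval t (Dw w (EMul a b)) = eval t (Dw w (EMul a' b')).
Proof.
  induction w as [|d w IHw]; intros a a' b b' Ha Hb t.
  - cbn. rewrite (eqv_eval _ _ t Ha), (eqv_eval _ _ t Hb). reflexivity.
  - change (eval t (Dw w (EAdd (EMul (Dt d a) b) (EMul a (Dt d b)))) =
            eval t (Dw w (EAdd (EMul (Dt d a') b') (EMul a' (Dt d b'))))).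
    rewrite !Dw_add. cbn [eval].
    rewrite (IHw (Dt d a) (Dt d a') b b'); try apply Dt_prop; auto.
    rewrite (IHw a a' (Dt d b) (Dt d b')); try apply Dt_prop; auto.
Qed.

#[local] Instance mul_prop : Proper (eqv ==> eqv ==> eqv) EMul.
Proof. intros a a' Ha b b' Hb w t. apply mul_aux; auto. Qed.

Lemma swap4 A B C D : eqv (EAdd (EAdd A B) (EAdd C D)) (EAdd (EAdd A C) (EAdd B D)).
Proof. intros w t. rewrite !Dw_add. cbn [eval]. ring. Qed.

Lemma comm e : eqv (Dt true (Dt false e)) (Dt false (Dt true e)).
Proof.
  induction e; simpl; try reflexivity.
  - rewrite IHe1, IHe2. reflexivity.
  - rewrite IHe1, IHe2. apply swap4.
Qed.

Fixpoint isc (e : expr) : bool :=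
  match e with EC _ => true | EAdd a b | EMul a b => isc a && isc b | _ => false end.

Lemma isc_Dt d k : isc k = true -> isc (Dt d k) = true /\ forall t, eval t (Dt d k) = 0.
Proof.
  induction k; simpl; intros H; try discriminate.
  - split; auto.
  - apply andb_prop in H as [H1 H2].
    destruct (IHk1 H1) as [A1 B1], (IHk2 H2) as [A2 B2].
    rewrite A1, A2; split; auto. intros; rewrite B1, B2; ring.
  - apply andb_prop in H as [H1 H2].
    destruct (IHk1 H1) as [A1 B1], (IHk2 H2) as [A2 B2].
    rewrite A1, A2, H1, H2; split; auto. intros; rewrite B1, B2; ring.
Qed.

Lemma mulc w : forall k g t, isc k = true -> eval t (Dw w (EMul k g)) = eval t k * eval t (Dw w g).
Proof.
  induction w as [|d w IHw]; intros k g t H.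
  - reflexivity.
  - change (eval t (Dw w (EAdd (EMul (Dt d k) g) (EMul k (Dt d g)))) = eval t k * eval t (Dw w (Dt d g))).
    rewrite Dw_add; cbn [eval]. destruct (isc_Dt d k H) as [A B].
    rewrite !IHw; auto. rewrite B. ring.
Qed.

Lemma Dt_mulc d k g : isc k = true -> eqv (Dt d (EMul k g)) (EMul k (Dt d g)).
Proof. intros H w t. change (eval t (Dw (d::w) (EMul k g)) = eval t (Dw w (EMul k (Dt d g)))).
  rewrite !mulc by auto. reflexivity. Qed.

#[local] Instance iter_prop d n : Proper (eqv ==> eqv) (Nat.iter n (Dt d)).
Proof. induction n; intros a b H; simpl; auto. apply Dt_prop, IHn, H. Qed.

#[local] Instance Dsig_prop i j : Proper (eqv ==> eqv) (Dsig i j).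
Proof. intros a b H; unfold Dsig. apply iter_prop, iter_prop, H. Qed.

Lemma iter_mulc d n k g : isc k = true -> eqv (Nat.iter n (Dt d) (EMul k g)) (EMul k (Nat.iter n (Dt d) g)).
Proof. intros H; induction n; simpl. reflexivity. rewrite IHn. apply Dt_mulc, H. Qed.

Lemma Dsig_mulc i j k g : isc k = true -> eqv (Dsig i j (EMul k g)) (EMul k (Dsig i j g)).
Proof. intros H; unfold Dsig. rewrite iter_mulc by auto. apply iter_mulc, H. Qed.

Arguments Dsig : simpl never.

Lemma Dw_C0 w : Dw w (EC 0) = EC 0.
Proof. induction w; simpl; auto. Qed.

Lemma lin_lap : lin laplace =
  [((0,0)%nat, EAdd (EC 0) (EC 0)); ((0,1)%nat, EAdd (EC 0) (EC 0));
   ((0,2)%nat, EAdd (EC 0) (EC 1)); ((1,0)%nat, EAdd (EC 0) (EC 0));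
   ((1,1)%nat, EAdd (EC 0) (EC 0)); ((1,2)%nat, EAdd (EC 0) (EC 0));
   ((2,0)%nat, EAdd (EC 1) (EC 0)); ((2,1)%nat, EAdd (EC 0) (EC 0));
   ((2,2)%nat, EAdd (EC 0) (EC 0))].
Proof. reflexivity. Qed.

Lemma lap_adj g : eqv (apply_adj (lin laplace) g) (EAdd (Dsig 2 0 g) (Dsig 0 2 g)).
Proof.
  rewrite lin_lap. unfold apply_adj. cbn [map esum fold_right].
  rewrite !Dsig_mulc by reflexivity.
  intros w t. rewrite !Dw_add. cbn [eval]. rewrite !mulc by reflexivity.
  cbn [eval]. repeat (rewrite mulc by reflexivity). cbn [eval]. rewrite Dw_C0. cbn [eval Nat.add]. ring.
Qed.

Lemma lap_op g : eqv (apply_op (lin laplace) g) (EAdd (Dsig 2 0 g) (Dsig 0 2 g)).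
Proof.
  rewrite lin_lap. unfold apply_op. cbn [map esum fold_right fst snd].
  intros w t. rewrite !Dw_add. cbn [eval]. rewrite !mulc by reflexivity.
  cbn [eval]. rewrite Dw_C0. cbn [eval]. ring.
Qed.

Inductive xe : Type :=
| XC : R -> xe | XX | XY | XU : nat -> nat -> xe | XP : nat -> nat -> xe
| XF : nat -> nat -> xe | XAdd : xe -> xe -> xe | XMul : xe -> xe -> xe.

Fixpoint emb (f : expr) (e : xe) : expr :=
  match e with
  | XC c => EC c | XX => EX | XY => EY | XU i j => EU i j | XP i j => EP i j
  | XF i j => Dsig i j f
  | XAdd a b => EAdd (emb f a) (emb f b)
  | XMul a b => EMul (emb f a) (emb f b)
  end.

Fixpoint Dt' (d : bool) (e : xe) : xe :=
  match e with
  | XC _ => XC 0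
  | XX => XC (if d then 1 else 0)
  | XY => XC (if d then 0 else 1)
  | XU i j => if d then XU (S i) j else XU i (S j)
  | XP i j => if d then XP (S i) j else XP i (S j)
  | XF i j => if d then XF (S i) j else XF i (S j)
  | XAdd a b => XAdd (Dt' d a) (Dt' d b)
  | XMul a b => XAdd (XMul (Dt' d a) b) (XMul a (Dt' d b))
  end.

Fixpoint ev' (t : jetpt) (Fv : nat -> nat -> R) (e : xe) : R :=
  match e with
  | XC c => c | XX => jx t | XY => jy t | XU i j => ju t i j | XP i j => jp t i j
  | XF i j => Fv i j
  | XAdd a b => ev' t Fv a + ev' t Fv b
  | XMul a b => ev' t Fv a * ev' t Fv b
  end.

Lemma ev'_emb t f e : eval t (emb f e) = ev' t (fun i j => eval t (Dsig i j f)) e.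
Proof. induction e; simpl; congruence. Qed.

Lemma Dsig_S_false i j f : eqv (Dsig i (S j) f) (Dt false (Dsig i j f)).
Proof.
  induction i.
  - reflexivity.
  - change (eqv (Dt true (Dsig i (S j) f)) (Dt false (Dt true (Dsig i j f)))).
    rewrite IHi. apply comm.
Qed.

Lemma emb_Dt f d e : eqv (emb f (Dt' d e)) (Dt d (emb f e)).
Proof.
  induction e; simpl; try reflexivity.
  - destruct d; reflexivity.
  - destruct d; reflexivity.
  - destruct d; simpl. reflexivity. apply Dsig_S_false.
  - rewrite IHe1, IHe2; reflexivity.
  - rewrite IHe1, IHe2; reflexivity.
Qed.

Definition Dsig' (i j : nat) (e : xe) : xe := Nat.iter i (Dt' true) (Nat.iter j (Dt' false) e).

Lemma emb_iter f d n e : eqv (emb f (Nat.iter n (Dt' d) e)) (Nat.iter n (Dt d) (emb f e)).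
Proof. induction n; simpl. reflexivity. rewrite emb_Dt, IHn. reflexivity. Qed.

Lemma emb_Dsig f i j e : eqv (emb f (Dsig' i j e)) (Dsig i j (emb f e)).
Proof. unfold Dsig', Dsig. rewrite emb_iter, emb_iter. reflexivity. Qed.

Fixpoint inc (e : expr) : xe :=
  match e with
  | EC c => XC c | EX => XX | EY => XY | EU i j => XU i j | EP i j => XP i j
  | EAdd a b => XAdd (inc a) (inc b)
  | EMul a b => XMul (inc a) (inc b)
  end.

Lemma emb_inc f e : emb f (inc e) = e.
Proof. induction e; simpl; congruence. Qed.

Definition apply_adj' (A : cdo) (g : xe) : xe :=
  fold_right XAdd (XC 0) (map (fun c =>
     let '((i, j), a) := c in XMul (XC ((-1) ^ (i + j))) (Dsig' i j (XMul (inc a) g))) A).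

Definition apply_op' (A : cdo) (g : xe) : xe :=
  fold_right XAdd (XC 0) (map (fun c => XMul (inc (snd c)) (Dsig' (fst (fst c)) (snd (fst c)) g)) A).

Lemma emb_adj f A g : eqv (emb f (apply_adj' A g)) (apply_adj A (emb f g)).
Proof.
  induction A as [|[[i j] a] A IH].
  - reflexivity.
  - unfold apply_adj', apply_adj in *. cbn [map fold_right esum emb].
    rewrite emb_Dsig, IH. cbn [emb]. rewrite emb_inc. reflexivity.
Qed.

Lemma emb_op f A g : eqv (emb f (apply_op' A g)) (apply_op A (emb f g)).
Proof.
  induction A as [|[[i j] a] A IH].
  - reflexivity.
  - unfold apply_op', apply_op in *. cbn [map fold_right esum emb fst snd].
    rewrite emb_Dsig, IH, emb_inc. reflexivity.
Qed.

Lemma Dsig_add i j a b : Dsig i j (EAdd a b) = EAdd (Dsig i j a) (Dsig i j b).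
Proof.
  unfold Dsig. induction i; simpl.
  - induction j; simpl; [reflexivity | rewrite IHj; reflexivity].
  - rewrite IHi. reflexivity.
Qed.

Lemma Dsig_U i j a b : Dsig i j (EU a b) = EU (i + a) (j + b).
Proof. unfold Dsig. induction i; simpl. induction j; simpl; [reflexivity | rewrite IHj; reflexivity]. rewrite IHi; reflexivity. Qed.

Lemma Dsig_P i j a b : Dsig i j (EP a b) = EP (i + a) (j + b).
Proof. unfold Dsig. induction i; simpl. induction j; simpl; [reflexivity | rewrite IHj; reflexivity]. rewrite IHi; reflexivity. Qed.

Lemma hu_of t : on_E laplace t -> forall a b, ju t (S (S a)) b = - ju t a (S (S b)).
Proof.
  intros HE a b. specialize (HE a b). unfold laplace in HE.
  rewrite Dsig_add, !Dsig_U in HE. cbn [eval] in HE.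
  replace (a + 2)%nat with (S (S a)) in HE by lia.
  replace (b + 2)%nat with (S (S b)) in HE by lia.
  replace (a + 0)%nat with a in HE by lia.
  replace (b + 0)%nat with b in HE by lia. lra.
Qed.

Lemma hp_of t : on_TE laplace t -> forall a b, jp t (S (S a)) b = - jp t a (S (S b)).
Proof.
  intros [_ HE] a b. specialize (HE a b).
  rewrite (eqv_eval _ _ t (Dsig_prop a b _ _ (lap_op (EP 0 0)))) in HE.
  rewrite Dsig_add, !Dsig_P in HE. unfold Dsig in HE. cbn [eval Nat.iter Dt] in HE.
  replace (a + (2 + 0))%nat with (S (S a)) in HE by lia.
  replace (b + (2 + 0))%nat with (S (S b)) in HE by lia.
  replace (a + (0 + 0))%nat with a in HE by lia.
  replace (b + (0 + 0))%nat with b in HE by lia. lra.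
Qed.

#[local] Instance adj_prop A : Proper (eqv ==> eqv) (apply_adj A).
Proof.
  intros g g' Hg. induction A as [|[[i j] a] A IH].
  - reflexivity.
  - unfold apply_adj in *. cbn [map esum fold_right]. rewrite IH, Hg. reflexivity.
Qed.

Definition LapX := XAdd (XF 2 0) (XF 0 2).

Lemma ii_of H :
  (forall t Fv, (forall a b, ju t (S (S a)) b = - ju t a (S (S b))) ->
     ev' t Fv (apply_adj' H LapX) =
     ev' t Fv (XAdd (Dsig' 2 0 (apply_op' H (XF 0 0))) (Dsig' 0 2 (apply_op' H (XF 0 0))))) ->
  forall f, p_free f -> forall t, on_E laplace t ->
      eval t (apply_adj H (apply_adj (lin laplace) f)) =
      eval t (apply_op (lin laplace) (apply_op H f)).
Proof.
  intros Hyp f _ t HE.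
  assert (E1 : eqv (apply_adj H (apply_adj (lin laplace) f)) (emb f (apply_adj' H LapX))).
  { rewrite emb_adj. rewrite lap_adj. reflexivity. }
  assert (E2 : eqv (apply_op (lin laplace) (apply_op H f))
     (emb f (XAdd (Dsig' 2 0 (apply_op' H (XF 0 0))) (Dsig' 0 2 (apply_op' H (XF 0 0)))))).
  { rewrite lap_op. cbn [emb]. rewrite !emb_Dsig, emb_op. reflexivity. }
  rewrite (eqv_eval _ _ t E1), (eqv_eval _ _ t E2), !ev'_emb.
  apply Hyp. apply hu_of; auto.
Qed.

Lemma i_of H :
  (forall t, (forall a b, ju t (S (S a)) b = - ju t a (S (S b))) ->
             (forall a b, jp t (S (S a)) b = - jp t a (S (S b))) ->
     eval t (EAdd (Dsig 2 0 (Hu H)) (Dsig 0 2 (Hu H))) = 0) ->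
  forall t, on_TE laplace t -> eval t (apply_op (lin laplace) (Hu H)) = 0.
Proof.
  intros Hyp t HT. rewrite (eqv_eval _ _ t (lap_op _)).
  apply Hyp. apply hu_of, HT. apply hp_of, HT.
Qed.

Ltac solve_i := apply i_of; intros t hu hp;
  unfold Hu, apply_op, Dsig; simpl; repeat rewrite hu; repeat rewrite hp; ring.
Ltac solve_ii := apply ii_of; intros t Fv hu;
  unfold apply_adj', apply_op', Dsig', LapX; simpl; repeat rewrite hu; ring.

Theorem mainTheorem3 :
  forall B, In B [Bv0; Bv1; Bv2; Bv3; Bv4; Bv5; Bv6; Bv7; Bv8] ->
    variational_bivector laplace B.
Proof.
  intros B HB. simpl in HB.
  repeat destruct HB as [<-|HB]; try contradiction.
  all: split; [solve_i|solve_ii].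
Qed.
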